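(* Consider the quantized sensor-network model described in the context, and assume all attacks are estimable, i.e. $\mathbf{J}_{\boldsymbol\tau^{(p)}}$ is nonsingular for every $p=1,\dots,P$; assume also that $\mathbf{J}_{\mathcal{A}_0}$ and $\mathbf{J}_{\boldsymbol\Theta}$ are nonsingular. Then the Cramér–Rao bound for $\boldsymbol\theta$ satisfies $$\big[\mathbf{J}_{\boldsymbol\Theta}^{-1}\big]_{1:D_{\boldsymbol\theta}}\preceq \mathbf{J}_{\mathcal{A}_0}^{-1}$$ in the positive semidefinite order, and equality holds if and only if for every $p=1,\dots,P$, $$\mathscr{R}\big(\mathbf{V}_{\boldsymbol\theta^{(p)}}\boldsymbol\Lambda_{\boldsymbol\theta^{(p)}}^T\big)\subseteq\mathscr{R}\big(\mathbf{V}_{\boldsymbol\tau^{(p)}}\boldsymbol\Lambda_{\boldsymbol\tau^{(p)}}^T\big).$$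
   Context: Sensors are indexed by $j\in\{1,\dots,N\}$. Sensor $j$ acquires $K_j$ scalar measurements $\tilde x_{jk}$, $k=1,\dots,K_j$, each quantized by an $R_j$-level quantizer with fixed disjoint regions $I_j^{(1)},\dots,I_j^{(R_j)}$ partitioning $\mathbb{R}$, producing $\tilde u_{jk}=\sum_{r=1}^{R_j} r\,\mathbb{1}\{\tilde x_{jk}\in I_j^{(r)}\}$. The sensor set is partitioned into disjoint sets $\mathcal{A}_0$ (unattacked) and $\mathcal{A}_1,\dots,\mathcal{A}_P$ (attacked, grouped by attack). Unknown deterministic parameters: $\boldsymbol\theta\in\mathbb{R}^{D_{\boldsymbol\theta}}$ and $\boldsymbol\tau^{(p)}\in\mathbb{R}^{D_p}$, $p=1,\dots,P$. The $\{\tilde x_{jk}\}$ are independent; $\tilde x_{jk}$ has pdf $f_{jk}(\cdot\mid\boldsymbol\theta)$ if $j\in\mathcal{A}_0$ and $g_{jk}(\cdot\mid\boldsymbol\theta,\boldsymbol\tau^{(p)})$ if $j\in\mathcal{A}_p$, $p\ge1$. Let $p_{jr}^{(k)}=\Pr(\tilde u_{jk}=r)$ (the integral of the corresponding pdf over $I_j^{(r)}$), assumed positive and differentiable in the parameters. Let $\boldsymbol\Theta=[\boldsymbol\theta^T,(\boldsymbol\tau^{(1)})^T,\dots,(\boldsymbol\tau^{(P)})^T]^T$ and $\mathbf{J}_{\boldsymbol\Theta}=\sum_{j=1}^N\sum_{k=1}^{K_j}\sum_{r=1}^{R_j}\frac{1}{p_{jr}^{(k)}}\frac{\partial p_{jr}^{(k)}}{\partial\boldsymbol\Theta}\big[\frac{\partial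 p_{jr}^{(k)}}{\partial\boldsymbol\Theta}\big]^T$ (the Fisher information matrix of the quantized data). For $p\ge0$, $\mathbf{J}_{\mathcal{A}_p}=\sum_{j\in\mathcal{A}_p}\sum_{k}\sum_{r}\frac{1}{p_{jr}^{(k)}}\frac{\partial p_{jr}^{(k)}}{\partial\boldsymbol\theta}\big[\frac{\partial p_{jr}^{(k)}}{\partial\boldsymbol\theta}\big]^T$, and for $p\ge1$, $\mathbf{J}_{\boldsymbol\tau^{(p)}}=\sum_{j\in\mathcal{A}_p}\sum_{k}\sum_{r}\frac{1}{p_{jr}^{(k)}}\frac{\partial p_{jr}^{(k)}}{\partial\boldsymbol\tau^{(p)}}\big[\frac{\partial p_{jr}^{(k)}}{\partial\boldsymbol\tau^{(p)}}\big]^T$. For $p\ge1$, let $M_p=\sum_{j\in\mathcal{A}_p}K_jR_j$ and define $\boldsymbol\Phi_{\boldsymbol\theta^{(p)}}\in\mathbb{R}^{D_{\boldsymbol\theta}\times M_p}$ and $\boldsymbol\Phi_{\boldsymbol\tau^{(p)}}\in\mathbb{R}^{D_p\times M_p}$ as the matrices whose columns, indexed by the triples $(j,k,r)$ with $j\in\mathcal{A}_p$, $1\le k\le K_j$, $1\le r\le R_j$ (in the same fixed order for both matrices), are respectively $(p_{jr}^{(k)})^{-1/2}\,\partial p_{jr}^{(k)}/\partial\boldsymbol\theta$ and $(p_{jr}^{(k)})^{-1/2}\,\partial p_{jr}^{(k)}/\partial\boldsymbol\tau^{(p)}$. Let $\boldsymbol\Phi_{\boldsymbol\theta^{(p)}}=\mathbf{U}_{\boldsymbol\theta^{(p)}}\boldsymbol\Lambda_{\boldsymbol\theta^{(p)}}\mathbf{V}_{\boldsymbol\theta^{(p)}}^T$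 and $\boldsymbol\Phi_{\boldsymbol\tau^{(p)}}=\mathbf{U}_{\boldsymbol\tau^{(p)}}\boldsymbol\Lambda_{\boldsymbol\tau^{(p)}}\mathbf{V}_{\boldsymbol\tau^{(p)}}^T$ be singular value decompositions. $\mathscr{R}(\cdot)$ denotes range (column space), $[\mathbf{A}]_{1:D}$ denotes the leading $D\times D$ principal submatrix, and $\preceq$ is the positive semidefinite (Loewner) order. *)

(* Defs.v *)
From HB Require Import structures.
From mathcomp Require Import all_boot all_order all_algebra.
From mathcomp Require Import all_classical all_reals all_analysis.
Import Order.TTheory GRing.Theory Num.Theory numFieldNormedType.Exports.

Unset Printing Implicit Defensive.

Local Open Scope classical_set_scope.
Local Open Scope ring_scope.

Definition is_pdf (R : realType) (pdf : R -> R) : Prop :=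
  [/\ measurable_fun setT pdf, (forall x, 0 <= pdf x) &
      (\int[@lebesgue_measure R]_x (pdf x)%:E = 1)%E].

Definition cell_prob (R : realType) (pdf : R -> R) (I : set R) : R :=
  fine (\int[@lebesgue_measure R]_(x in I) (pdf x)%:E).

Definition quantizer_regions (R : realType) (n : nat) (I : 'I_n -> set R) : Prop :=
  [/\ forall r, measurable (I r),
      forall r s, r != s -> I r `&` I s = set0 &
      \bigcup_(r in [set: 'I_n]) I r = [set: R]].

Definition grad (R : realType) (n : nat) (h : 'rV[R]_n -> R) (x : 'rV[R]_n)
  : 'cV[R]_n := \col_i ('D_(delta_mx 0 i) h x).

Definition psd (R : realType) (n : nat) (A : 'M[R]_n) : Prop :=
  A^T = A /\ forall v : 'cV[R]_n, 0 <= (v^T *m A *m v) 0 0.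
Definition loewner_le (R : realType) (n : nat) (A B : 'M[R]_n) : Prop :=
  @psd R n (B - A).

(* Range (column space) inclusion: R(A) is contained in R(B). *)
Definition range_sub (R : realType) (m n1 n2 : nat)
  (A : 'M[R]_(m, n1)) (B : 'M[R]_(m, n2)) : bool := (A^T <= B^T)%MS.

Definition is_svd (R : realType) (m n : nat) (A : 'M[R]_(m, n))
  (U : 'M[R]_m) (S : 'M[R]_(m, n)) (V : 'M[R]_n) : Prop :=
  [/\ U^T *m U = 1%:M, V^T *m V = 1%:M,
      forall (i : 'I_m) (j : 'I_n), nat_of_ord i <> nat_of_ord j -> S i j = 0,
      forall (i : 'I_m) (j : 'I_n), nat_of_ord i = nat_of_ord j -> 0 <= S i j &
      A = U *m S *m V^T].

Arguments psd {R n}.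
Arguments loewner_le {R n}.
Arguments range_sub {R m n1 n2}.
Arguments is_svd {R m n}.
Arguments grad {R n}.
Arguments cell_prob {R}.
Arguments is_pdf {R}.
Arguments quantizer_regions {R n}.

Section Model.
Context (R : realType).
Context (N P Dth : nat) (D : 'I_P -> nat).
(* K j = number of measurements of sensor j, Rl j = number of quantizer levels *)
Context (K Rl : 'I_N -> nat).
(* grp j = None : j in A_0 ; grp j = Some p : j in A_(p+1) (attack index p : 'I_P) *)
Context (grp : 'I_N -> option 'I_P).
Context (I : forall j : 'I_N, 'I_(Rl j) -> set R).
Context (f : forall j : 'I_N, 'I_(K j) -> 'rV[R]_Dth -> R -> R).
Context (g : forall (j : 'I_N) (k : 'I_(K j)) (p : 'I_P),
              'rV[R]_Dth -> 'rV[R]_(D p) -> R -> R).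
(* the parameter point at which the FIM is evaluated *)
Context (th0 : 'rV[R]_Dth) (tau0 : forall p : 'I_P, 'rV[R]_(D p)).

Definition probA0 (j : 'I_N) (k : 'I_(K j)) (r : 'I_(Rl j)) (th : 'rV[R]_Dth) : R :=
  cell_prob (f j k th) (I j r).
Definition probA (j : 'I_N) (k : 'I_(K j)) (p : 'I_P) (r : 'I_(Rl j))
  (th : 'rV[R]_Dth) (t : 'rV[R]_(D p)) : R :=
  cell_prob (g j k p th t) (I j r).

Definition prob (j : 'I_N) (k : 'I_(K j)) (r : 'I_(Rl j)) : R :=
  match grp j with
  | None => probA0 j k r th0
  | Some p => probA j k p r th0 (tau0 p)
  end.

Definition dprob_th (j : 'I_N) (k : 'I_(K j)) (r : 'I_(Rl j)) : 'cV[R]_Dth :=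
  match grp j with
  | None => grad (fun th => probA0 j k r th) th0
  | Some p => grad (fun th => probA j k p r th (tau0 p)) th0
  end.

Definition dprob_tau (j : 'I_N) (k : 'I_(K j)) (r : 'I_(Rl j)) (q : 'I_P)
  : 'cV[R]_(D q) :=
  if grp j == Some q then grad (fun t => probA j k q r th0 t) (tau0 q) else 0.

Definition dprob_Th (j : 'I_N) (k : 'I_(K j)) (r : 'I_(Rl j))
  : 'cV[R]_(Dth + \sum_(q < P) D q) :=
  col_mx (dprob_th j k r) (mxcol (fun q => dprob_tau j k r q)).

Definition J_Theta : 'M[R]_(Dth + \sum_(q < P) D q) :=
  \sum_(j < N) \sum_(k < K j) \sum_(r < Rl j)
     (prob j k r)^-1 *: (dprob_Th j k r *m (dprob_Th j k r)^T).

Definition J_A (a : option 'I_P) : 'M[R]_Dth :=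
  \sum_(j < N | grp j == a) \sum_(k < K j) \sum_(r < Rl j)
     (prob j k r)^-1 *: (dprob_th j k r *m (dprob_th j k r)^T).

Definition J_tau (p : 'I_P) : 'M[R]_(D p) :=
  \sum_(j < N | grp j == Some p) \sum_(k < K j) \sum_(r < Rl j)
     (prob j k r)^-1 *: (dprob_tau j k r p *m (dprob_tau j k r p)^T).

(* triples (j,k,r) with j in A_p, in the fixed order [enum] *)
Definition triple := {j : 'I_N & ('I_(K j) * 'I_(Rl j))%type}.
Definition triples (p : 'I_P) := [set x : triple | grp (tag x) == Some p].
Definition Mp (p : 'I_P) : nat := #|triples p|.

Definition Phi_th (p : 'I_P) : 'M[R]_(Dth, Mp p) :=
  \matrix_(i, c) let x := enum_val c in
     (Num.sqrt (prob (tag x) (tagged x).1 (tagged x).2))^-1 *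
     dprob_th (tag x) (tagged x).1 (tagged x).2 i 0.

Definition Phi_tau (p : 'I_P) : 'M[R]_(D p, Mp p) :=
  \matrix_(i, c) let x := enum_val c in
     (Num.sqrt (prob (tag x) (tagged x).1 (tagged x).2))^-1 *
     dprob_tau (tag x) (tagged x).1 (tagged x).2 p i 0.

End Model.

Arguments probA0 {R N Dth}.
Arguments probA {R N P Dth}.
Arguments prob {R N P Dth}.
Arguments dprob_th {R N P Dth}.
Arguments dprob_tau {R N P Dth}.
Arguments dprob_Th {R N P Dth}.
Arguments J_Theta {R N P Dth}.
Arguments J_A {R N P Dth}.
Arguments J_tau {R N P Dth}.
Arguments Mp {N P}.
Arguments Phi_th {R N P Dth}.
Arguments Phi_tau {R N P Dth}.

(* Main.v *)
Require Import Defs.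
From HB Require Import structures.
From mathcomp Require Import all_boot all_order all_algebra.
From mathcomp Require Import all_classical all_reals all_analysis.
Import Order.TTheory GRing.Theory Num.Theory numFieldNormedType.Exports.
Local Open Scope classical_set_scope.
Local Open Scope ring_scope.
Section PSD.
Variable R : realType.

Lemma psd_add n (A B : 'M[R]_n) : psd A -> psd B -> psd (A + B).
Proof.
move=> [sA pA] [sB pB]; rewrite /psd; split; first by rewrite linearD /= sA sB.
move=> v; rewrite mulmxDr mulmxDl mxE addr_ge0 //.
Qed.

Lemma psd0 n : psd (0 : 'M[R]_n).
Proof. by rewrite /psd trmx0; split => // v; rewrite !mulmx0 mul0mx mxE. Qed.

Lemma psd_sum (I : finType) (Q : pred I) n (F : I -> 'M[R]_n) :
  (forall i, Q i -> psd (F i)) -> psd (\sum_(i | Q i) F i).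
Proof.
move=> H; elim/big_rec: _ => [|i M Qi HM]; [exact: psd0| exact: psd_add (H i Qi) HM].
Qed.

Lemma psd_congr n k (A : 'M[R]_n) (X : 'M[R]_(n, k)) : psd A -> psd (X^T *m A *m X).
Proof.
move=> [sA pA]; rewrite /psd; split; first by rewrite !trmx_mul trmxK sA mulmxA.
move=> v; have := pA (X *m v); by rewrite trmx_mul !mulmxA.
Qed.

Lemma quad_self n (u : 'cV[R]_n) : 0 <= (u^T *m u) 0 0.
Proof. rewrite mxE; apply: sumr_ge0 => i _; rewrite mxE -expr2; exact: sqr_ge0. Qed.

Lemma quad_self0 n (u : 'cV[R]_n) : (u^T *m u) 0 0 = 0 -> u = 0.
Proof.
rewrite mxE => H; apply/matrixP => i j; rewrite ord1 mxE.
have H0 : forall l : 'I_n, true -> 0 <= u^T 0 l * u l 0.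
  by move=> l _; rewrite mxE -expr2 sqr_ge0.
have := @psumr_eq0P _ _ _ _ H0 H i isT.
by rewrite mxE -expr2 => /eqP; rewrite sqrf_eq0 => /eqP.
Qed.

Lemma psd_outer n k (X : 'M[R]_(n, k)) : psd (X *m X^T).
Proof.
rewrite /psd; split; first by rewrite trmx_mul trmxK.
move=> v; have := @quad_self _ (X^T *m v).
by rewrite trmx_mul trmxK !mulmxA.
Qed.

Lemma psd_scale n (c : R) (A : 'M[R]_n) : 0 <= c -> psd A -> psd (c *: A).
Proof.
move=> c0 [sA pA]; rewrite /psd; split; first by rewrite linearZ /= sA.
by move=> v; rewrite -scalemxAr -scalemxAl mxE mulr_ge0.
Qed.

Lemma psd_inv n (A : 'M[R]_n) : psd A -> A \in unitmx -> psd (invmx A).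
Proof.
move=> [sA pA] uA; have sI : (invmx A)^T = invmx A by rewrite trmx_inv sA.
rewrite /psd; split => // v; have := pA (invmx A *m v).
by rewrite trmx_mul sI -!mulmxA mulKmx.
Qed.

Lemma mx_eq0_of n k (X : 'M[R]_(n, k)) : (forall v : 'cV_k, X *m v = 0) -> X = 0.
Proof.
move=> H; apply/matrixP => i j.
have := congr1 (fun M : 'cV[R]_n => M i 0) (H (delta_mx j 0)).
rewrite !mxE (bigD1 j) //= big1 ?addr0; first by rewrite !mxE !eqxx mulr1.
by move=> l /negbTE nl; rewrite !mxE nl mulr0.
Qed.
End PSD.

Section Abstract.
Variables (R : realType) (n P : nat) (d m : 'I_P -> nat).
Variables (A0 : 'M[R]_n) (Ph : forall p, 'M[R]_(n, m p))
  (Pt : forall p, 'M[R]_(d p, m p)) (J : 'M[R]_(n + \sum_p d p)).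

Lemma schur_main :
  psd A0 -> A0 \in unitmx -> (forall p, Pt p *m (Pt p)^T \in unitmx) -> J \in unitmx ->
  ulsubmx J = A0 + \sum_p Ph p *m (Ph p)^T ->
  ursubmx J = mxrow (fun p => Ph p *m (Pt p)^T) ->
  dlsubmx J = mxcol (fun p => Pt p *m (Ph p)^T) ->
  drsubmx J = mxdiag (fun p => Pt p *m (Pt p)^T) ->
  loewner_le (ulsubmx (invmx J)) (invmx A0) /\
  (ulsubmx (invmx J) = invmx A0 <-> forall p, (Ph p <= Pt p)%MS).
Proof.
move=> psdA uA uC uJ ulJ urJ dlJ drJ.
set Ct := fun p => Pt p *m (Pt p)^T.
have sCi : forall p, (invmx (Ct p))^T = invmx (Ct p).
  by move=> p; rewrite trmx_inv /Ct trmx_mul trmxK.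
set Ep := fun p => Ph p - Ph p *m (Pt p)^T *m invmx (Ct p) *m Pt p.
have E2 : forall p, Ep p *m (Ep p)^T =
    Ph p *m (Ph p)^T - Ph p *m (Pt p)^T *m invmx (Ct p) *m Pt p *m (Ph p)^T.
  move=> p; rewrite /Ep linearB /= mulmxBl !mulmxBr.
  rewrite !trmx_mul !trmxK sCi.
  set G := Ph p *m (Pt p)^T *m invmx (Ct p) *m Pt p *m (Ph p)^T.
  have -> : Ph p *m ((Pt p)^T *m (invmx (Ct p) *m (Pt p *m (Ph p)^T))) = G.
    by rewrite /G !mulmxA.
  have -> : Ph p *m (Pt p)^T *m invmx (Ct p) *m Pt p *m
     ((Pt p)^T *m (invmx (Ct p) *m (Pt p *m (Ph p)^T))) = G.
    rewrite /G !mulmxA -[_ *m Pt p *m (Pt p)^T]mulmxA -/(Ct p) mulmxKV //.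
  by rewrite subrr subr0.
set M := \sum_p Ep p *m (Ep p)^T.
have psdM : psd M by apply: psd_sum => p _; exact: psd_outer.
set Z := ulsubmx (invmx J).
have key : (A0 + M) *m Z = 1%:M.
  have := mulmxV uJ.
  rewrite -{1}(submxK J) -(submxK (invmx J)) mulmx_block scalar_mx_block.
  move=> /eq_block_mx [e1 _ e3 _].
  rewrite ulJ urJ in e1; rewrite dlJ drJ in e3.
  rewrite -/Z in e1 e3.
  set Y := dlsubmx (invmx J) in e1 e3.
  rewrite -(submxcolK Y) in e1 e3.
  rewrite mul_mxdiag_mxcol mxcol_mul -mxcolD -mxcol0 in e3.
  have eY : forall p, submxcol Y p = - (invmx (Ct p) *m (Pt p *m (Ph p)^T *m Z)).
    move=> p; move/eq_mxcolP: e3 => /(_ p) e.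
    rewrite -[submxcol Y p](mulKmx (uC p)) -/(Ct p).
    by rewrite -mulmxN; congr (_ *m _); apply/eqP; rewrite -addr_eq0 addrC e.
  rewrite mul_mxrow_mxcol in e1.
  rewrite -e1 !mulmxDl -addrA; congr (_ + _).
  rewrite /M !mulmx_suml -big_split /=; apply: eq_bigr => p _.
  rewrite E2 eY mulmxBl mulmxN !mulmxA.
  done.
have [sM _] := psdM.
have [sA _] := psdA.
set S := A0 + M in key.
have sS : S^T = S by rewrite /S linearD /= sA sM.
have ZS : Z *m S = 1%:M by apply: mulmx1C.
have sZ : Z^T = Z.
  have h : Z^T *m S = 1%:M by rewrite -sS -trmx_mul key trmx1.
  by rewrite -[Z^T]mulmx1 -key mulmxA h mul1mx.
have h1 : invmx A0 - Z = Z *m M *m invmx A0.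
  rewrite -{1}[invmx A0]mul1mx -ZS /S mulmxDr mulmxDl -[Z *m A0 *m _]mulmxA mulmxV //.
  by rewrite mulmx1 addrC addKr.
have h2 : Z *m M *m invmx A0 =
    Z^T *m M *m Z + (M *m Z)^T *m invmx A0 *m (M *m Z).
  rewrite sZ trmx_mul sM sZ.
  rewrite -[LHS]mulmx1 -key /S mulmxDl mulmxDr.
  by rewrite !mulmxA -[Z *m M *m invmx A0 *m A0]mulmxA mulVmx // mulmx1.
split.
  rewrite /loewner_le h1 h2; apply: psd_add; first exact: psd_congr.
  by apply: psd_congr; apply: psd_inv.
split.
  move=> eZ.
  have eS : S = A0 by rewrite -[S]mul1mx -(mulmxV uA) -eZ -mulmxA ZS mulmx1.
  have M0 : M = 0 by apply: (addrI A0); rewrite addr0.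
  have Ep0 : forall p, Ep p = 0.
    have q0 : forall v : 'cV_n, \sum_p ((((Ep p)^T *m v)^T *m ((Ep p)^T *m v)) 0 0) = 0.
      move=> v; transitivity ((v^T *m M *m v) 0 0); last first.
        by rewrite M0 mulmx0 mul0mx mxE.
      rewrite /M mulmx_sumr mulmx_suml summxE.
      apply: eq_bigr => p _; congr (_ 0 0).
      by rewrite trmx_mul trmxK !mulmxA.
    move=> p; apply: trmx_inj; rewrite trmx0; apply: mx_eq0_of => v.
    apply: quad_self0.
    exact: (@psumr_eq0P _ _ _ (fun p => (((Ep p)^T *m v)^T *m ((Ep p)^T *m v)) 0 0) (fun p _ => @quad_self _ _ ((Ep p)^T *m v)) (q0 v) p isT).
  move=> p; have := Ep0 p; move/eqP; rewrite subr_eq0 => /eqP ->.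
  exact: submxMl.
move=> H.
have M0 : M = 0.
  rewrite /M big1 // => p _.
  have -> : Ep p = 0.
    rewrite /Ep; have [W ->] := submxP (H p).
    by rewrite -[W *m Pt p *m (Pt p)^T]mulmxA -/(Ct p) mulmxK // subrr.
  by rewrite mul0mx.
have ZA : Z *m A0 = 1%:M by rewrite -ZS /S M0 addr0.
by rewrite -[Z]mulmx1 -(mulmxV uA) mulmxA ZA mul1mx.
Qed.
End Abstract.

Section Model2.
Context (R : realType) (N P Dth : nat) (D : 'I_P -> nat).
Context (K Rl : 'I_N -> nat).
Context (grp : 'I_N -> option 'I_P).
Context (I : forall j : 'I_N, 'I_(Rl j) -> set R).
Context (f : forall j : 'I_N, 'I_(K j) -> 'rV[R]_Dth -> R -> R).
Context (g : forall (j : 'I_N) (k : 'I_(K j)) (p : 'I_P),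
              'rV[R]_Dth -> 'rV[R]_(D p) -> R -> R).
Context (th0 : 'rV[R]_Dth) (tau0 : forall p : 'I_P, 'rV[R]_(D p)).
Hypothesis Hpos : forall j k r, 0 < prob D K Rl grp I f g th0 tau0 j k r.
Local Notation pr := (prob D K Rl grp I f g th0 tau0).

Lemma Phi_mul p n1 n2 (u : forall j : 'I_N, 'I_(K j) -> 'I_(Rl j) -> 'cV[R]_n1)
  (w : forall j : 'I_N, 'I_(K j) -> 'I_(Rl j) -> 'cV[R]_n2) :
  (\matrix_(i, c) (let x := enum_val c in
     (Num.sqrt (pr (tag x) (tagged x).1 (tagged x).2))^-1 *
     u (tag x) (tagged x).1 (tagged x).2 i 0) : 'M[R]_(n1, Mp K Rl grp p)) *m
  (\matrix_(i, c) (let x := enum_val c in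
     (Num.sqrt (pr (tag x) (tagged x).1 (tagged x).2))^-1 *
     w (tag x) (tagged x).1 (tagged x).2 i 0) : 'M[R]_(n2, Mp K Rl grp p))^T
  = \sum_(j < N | grp j == Some p) \sum_(k < K j) \sum_(r < Rl j)
      (pr j k r)^-1 *: (u j k r *m (w j k r)^T).
Proof.
apply/matrixP => a b.
pose G (x : triple N K Rl) := (pr (tag x) (tagged x).1 (tagged x).2)^-1 *
  (u (tag x) (tagged x).1 (tagged x).2 a 0 * w (tag x) (tagged x).1 (tagged x).2 b 0).
transitivity (\sum_(x in triples N P K Rl grp p) G x).
  rewrite big_enum_val mxE; apply: eq_bigr => c _; rewrite !mxE /G /=.
  set x := enum_val c.
  rewrite mulrACA -invfM -expr2 sqr_sqrtr //; exact: ltW.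
transitivity (\sum_(j < N | grp j == Some p) \sum_(k < K j) \sum_(r < Rl j) G (Tagged (fun j => ('I_(K j) * 'I_(Rl j))%type) (k, r))); last first.
  rewrite summxE; apply: eq_bigr => j _; rewrite summxE; apply: eq_bigr => k _.
  rewrite summxE; apply: eq_bigr => r _; rewrite !mxE big_ord1 !mxE.
  by rewrite /G /=.
rewrite (eq_bigr (fun j => \sum_(kr : ('I_(K j) * 'I_(Rl j))%type | true && true) G (Tagged (fun j => ('I_(K j) * 'I_(Rl j))%type) kr))); last first.
  by move=> j _; rewrite pair_big /=; apply: eq_bigr => -[k r].
rewrite (sig_big_dep (fun j => grp j == Some p) (fun j (kr : ('I_(K j) * 'I_(Rl j))%type) => true)).
apply: eq_big => [x|x _]; first by rewrite andbT; apply/idP/idP => [/set_mem|H]; [by [] | exact: mem_set].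
by case: x.
Qed.
End Model2.

Section Gen.
Variable R : realType.

Lemma sum_block (I : finType) (Q : pred I) m1 m2 n1 n2
  (A : I -> 'M[R]_(m1, n1)) (B : I -> 'M[R]_(m1, n2))
  (C : I -> 'M[R]_(m2, n1)) (E : I -> 'M[R]_(m2, n2)) :
  \sum_(i | Q i) block_mx (A i) (B i) (C i) (E i) =
  block_mx (\sum_(i | Q i) A i) (\sum_(i | Q i) B i) (\sum_(i | Q i) C i) (\sum_(i | Q i) E i).
Proof.
apply/matrixP => i j; rewrite summxE -(splitK i) -(splitK j).
case: (fintype.split i) => a; case: (fintype.split j) => b /=;
  rewrite ?block_mxEul ?block_mxEur ?block_mxEdl ?block_mxEdr summxE;
  apply: eq_bigr => x _;
  by rewrite ?block_mxEul ?block_mxEur ?block_mxEdl ?block_mxEdr.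
Qed.

Lemma scale_mxrow (P : nat) (q_ : 'I_P -> nat) m (c : R) (B : forall j, 'M[R]_(m, q_ j)) :
  c *: mxrow B = mxrow (fun j => c *: B j).
Proof. by apply/matrixP => i j; rewrite !mxE. Qed.

Lemma scale_mxcol (P : nat) (q_ : 'I_P -> nat) m (c : R) (B : forall j, 'M[R]_(q_ j, m)) :
  c *: mxcol B = mxcol (fun j => c *: B j).
Proof. by apply/matrixP => i j; rewrite !mxE. Qed.

Lemma scale_mxblock (P Q : nat) (p_ : 'I_P -> nat) (q_ : 'I_Q -> nat) (c : R)
  (B : forall i j, 'M[R]_(p_ i, q_ j)) :
  c *: mxblock B = mxblock (fun i j => c *: B i j).
Proof. by apply/matrixP => i j; rewrite !mxE. Qed.

Lemma sum_split N P (grp : 'I_N -> option 'I_P) a b (F : 'I_N -> 'M[R]_(a, b)) :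
  \sum_j F j = \sum_(j | grp j == None) F j + \sum_p \sum_(j | grp j == Some p) F j.
Proof.
have -> : \sum_p \sum_(j | grp j == Some p) F j =
          \sum_j \sum_p (if grp j == Some p then F j else 0).
  rewrite (eq_bigr (fun p => \sum_j (if grp j == Some p then F j else 0))).
    exact: exchange_big.
  by move=> p _; rewrite big_mkcond.
rewrite [X in X + _]big_mkcond -big_split /=; apply: eq_bigr => j _.
case: (grp j) => [q|] /=.
  rewrite add0r (bigD1 q) //= eqxx big1 ?addr0 // => p pq.
  by case: eqP => // -[e]; rewrite e eqxx in pq.
by rewrite big1 ?addr0.
Qed.
End Gen.

Section Model3.
Context (R : realType) (N P Dth : nat) (D : 'I_P -> nat).
Context (K Rl : 'I_N -> nat).
Context (grp : 'I_N -> option 'I_P).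
Context (I : forall j : 'I_N, 'I_(Rl j) -> set R).
Context (f : forall j : 'I_N, 'I_(K j) -> 'rV[R]_Dth -> R -> R).
Context (g : forall (j : 'I_N) (k : 'I_(K j)) (p : 'I_P),
              'rV[R]_Dth -> 'rV[R]_(D p) -> R -> R).
Context (th0 : 'rV[R]_Dth) (tau0 : forall p : 'I_P, 'rV[R]_(D p)).
Hypothesis Hpos : forall j k r, 0 < prob D K Rl grp I f g th0 tau0 j k r.
Local Notation pr := (prob D K Rl grp I f g th0 tau0).
Local Notation dth := (dprob_th D K Rl grp I f g th0 tau0).
Local Notation dta := (dprob_tau D K Rl grp I g th0 tau0).
Local Notation Pth := (Phi_th D K Rl grp I f g th0 tau0).
Local Notation Pta := (Phi_tau D K Rl grp I f g th0 tau0).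
Local Notation JT := (J_Theta D K Rl grp I f g th0 tau0).

Lemma PP_thth p : Pth p *m (Pth p)^T = \sum_(j < N | grp j == Some p) \sum_(k < K j) \sum_(r < Rl j)
      (pr j k r)^-1 *: (dth j k r *m (dth j k r)^T).
Proof. exact: (@Phi_mul R N P Dth D K Rl grp I f g th0 tau0 Hpos p _ _ (fun j k r => dth j k r) (fun j k r => dth j k r)). Qed.
Lemma PP_thta p : Pth p *m (Pta p)^T = \sum_(j < N | grp j == Some p) \sum_(k < K j) \sum_(r < Rl j)
      (pr j k r)^-1 *: (dth j k r *m (dta j k r p)^T).
Proof. exact: (@Phi_mul R N P Dth D K Rl grp I f g th0 tau0 Hpos p _ _ (fun j k r => dth j k r) (fun j k r => dta j k r p)). Qed.
Lemma PP_tath p : Pta p *m (Pth p)^T = \sum_(j < N | grp j == Some p) \sum_(k < K j) \sum_(r < Rl j)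
      (pr j k r)^-1 *: (dta j k r p *m (dth j k r)^T).
Proof. exact: (@Phi_mul R N P Dth D K Rl grp I f g th0 tau0 Hpos p _ _ (fun j k r => dta j k r p) (fun j k r => dth j k r)). Qed.
Lemma PP_tata p : Pta p *m (Pta p)^T = J_tau D K Rl grp I f g th0 tau0 p.
Proof. exact: (@Phi_mul R N P Dth D K Rl grp I f g th0 tau0 Hpos p _ _ (fun j k r => dta j k r p) (fun j k r => dta j k r p)). Qed.

Lemma dta0 j k r q : grp j != Some q -> dta j k r q = 0.
Proof. by rewrite /dprob_tau => /negbTE ->. Qed.

Lemma JT_block : JT = block_mx
  (\sum_j \sum_(k < K j) \sum_(r < Rl j) (pr j k r)^-1 *: (dth j k r *m (dth j k r)^T))
  (\sum_j \sum_(k < K j) \sum_(r < Rl j) (pr j k r)^-1 *: (dth j k r *m (mxcol (dta j k r))^T))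
  (\sum_j \sum_(k < K j) \sum_(r < Rl j) (pr j k r)^-1 *: (mxcol (dta j k r) *m (dth j k r)^T))
  (\sum_j \sum_(k < K j) \sum_(r < Rl j) (pr j k r)^-1 *: (mxcol (dta j k r) *m (mxcol (dta j k r))^T)).
Proof.
rewrite /J_Theta -sum_block; apply: eq_bigr => j _.
rewrite -sum_block; apply: eq_bigr => k _.
rewrite -sum_block; apply: eq_bigr => r _.
by rewrite /dprob_Th tr_col_mx mul_col_row scale_block_mx.
Qed.

Lemma ul_JT : ulsubmx JT = J_A D K Rl grp I f g th0 tau0 None + \sum_p Pth p *m (Pth p)^T.
Proof.
rewrite JT_block block_mxKul (@sum_split _ _ _ grp); congr (_ + _).
by apply: eq_bigr => p _; rewrite PP_thth.
Qed.

Lemma ur_JT : ursubmx JT = mxrow (fun p => Pth p *m (Pta p)^T).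
Proof.
rewrite JT_block block_mxKur.
pose F := fun j (k : 'I_(K j)) (r : 'I_(Rl j)) q => (pr j k r)^-1 *: (dth j k r *m (dta j k r q)^T).
have e : forall j k r, (pr j k r)^-1 *: (dth j k r *m (mxcol (dta j k r))^T) =
    mxrow (F j k r).
  by move=> j k r; rewrite tr_mxcol mul_mxrow scale_mxrow.
rewrite (eq_bigr _ (fun j _ => eq_bigr _ (fun k _ => eq_bigr _ (fun r _ => e j k r)))).
transitivity (\sum_j mxrow (fun q => \sum_(k < K j) \sum_(r < Rl j) F j k r q)).
  apply: eq_bigr => j _.
  transitivity (\sum_(k < K j) mxrow (fun q => \sum_(r < Rl j) F j k r q)).
    by apply: eq_bigr => k _; rewrite mxrow_sum.
  by rewrite mxrow_sum.
rewrite -mxrow_sum; apply: eq_mxrow => q.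
rewrite PP_thta [in RHS]big_mkcond /=; apply: eq_bigr => j _.
case: eqP => // /eqP h; rewrite big1 // => k _; rewrite big1 // => r _.
by rewrite /F dta0 // trmx0 mulmx0 scaler0.
Qed.

Lemma dl_JT : dlsubmx JT = mxcol (fun p => Pta p *m (Pth p)^T).
Proof.
rewrite JT_block block_mxKdl.
pose F := fun j (k : 'I_(K j)) (r : 'I_(Rl j)) q => (pr j k r)^-1 *: (dta j k r q *m (dth j k r)^T).
have e : forall j k r, (pr j k r)^-1 *: (mxcol (dta j k r) *m (dth j k r)^T) =
    mxcol (F j k r).
  by move=> j k r; rewrite mxcol_mul scale_mxcol.
rewrite (eq_bigr _ (fun j _ => eq_bigr _ (fun k _ => eq_bigr _ (fun r _ => e j k r)))).
transitivity (\sum_j mxcol (fun q => \sum_(k < K j) \sum_(r < Rl j) F j k r q)).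
  apply: eq_bigr => j _.
  transitivity (\sum_(k < K j) mxcol (fun q => \sum_(r < Rl j) F j k r q)).
    by apply: eq_bigr => k _; rewrite mxcol_sum.
  by rewrite mxcol_sum.
rewrite -mxcol_sum; apply: eq_mxcol => q.
rewrite PP_tath [in RHS]big_mkcond /=; apply: eq_bigr => j _.
case: eqP => // /eqP h; rewrite big1 // => k _; rewrite big1 // => r _.
by rewrite /F dta0 // mul0mx scaler0.
Qed.

Lemma dr_JT : drsubmx JT = mxdiag (fun p => Pta p *m (Pta p)^T).
Proof.
rewrite JT_block block_mxKdr.
pose F := fun j (k : 'I_(K j)) (r : 'I_(Rl j)) q q' => (pr j k r)^-1 *: (dta j k r q *m (dta j k r q')^T).
have e : forall j k r, (pr j k r)^-1 *: (mxcol (dta j k r) *m (mxcol (dta j k r))^T) =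
    mxblock (F j k r).
  by move=> j k r; rewrite tr_mxcol mul_mxcol_mxrow scale_mxblock.
rewrite (eq_bigr _ (fun j _ => eq_bigr _ (fun k _ => eq_bigr _ (fun r _ => e j k r)))).
transitivity (\sum_j mxblock (fun q q' => \sum_(k < K j) \sum_(r < Rl j) F j k r q q')).
  apply: eq_bigr => j _.
  transitivity (\sum_(k < K j) mxblock (fun q q' => \sum_(r < Rl j) F j k r q q')).
    by apply: eq_bigr => k _; rewrite mxblock_sum.
  by rewrite mxblock_sum.
rewrite -mxblock_sum /mxdiag; apply: eq_mxblock => q q'.
case: eqVneq => [<-|ne].
  rewrite conform_mx_id PP_tata /J_tau [in RHS]big_mkcond /=; apply: eq_bigr => j _.
  case: eqP => // /eqP h; rewrite big1 // => k _; rewrite big1 // => r _.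
  by rewrite /F dta0 // mul0mx scaler0.
rewrite big1 // => j _; rewrite big1 // => k _; rewrite big1 // => r _.
have [h|h] := eqVneq (grp j) (Some q).
  rewrite /F (dta0 j k r q') ?trmx0 ?mulmx0 ?scaler0 // h.
  by apply: contra ne => /eqP [->].
by rewrite /F dta0 // mul0mx scaler0.
Qed.
End Model3.
Theorem theorem2 (R : realType) (N P Dth : nat) (D : 'I_P -> nat)
  (K Rl : 'I_N -> nat) (grp : 'I_N -> option 'I_P)
  (I : forall j : 'I_N, 'I_(Rl j) -> set R)
  (f : forall j : 'I_N, 'I_(K j) -> 'rV[R]_Dth -> R -> R)
  (g : forall (j : 'I_N) (k : 'I_(K j)) (p : 'I_P),
         'rV[R]_Dth -> 'rV[R]_(D p) -> R -> R)
  (th0 : 'rV[R]_Dth) (tau0 : forall p : 'I_P, 'rV[R]_(D p))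
  (* quantizer regions partition R *)
  (HI : forall j, quantizer_regions (I j))
  (* f_jk(. | theta), g_jk(. | theta, tau^(p)) are pdfs *)
  (Hf : forall j k th, grp j = None -> is_pdf (f j k th))
  (Hg : forall j k p th t, grp j = Some p -> is_pdf (g j k p th t))
  (* p_jr^(k) positive and differentiable in the parameters *)
  (Hpos : forall j k r, 0 < prob D K Rl grp I f g th0 tau0 j k r)
  (Hdiff0 : forall j k r, grp j = None ->
     differentiable (probA0 K Rl I f j k r) th0)
  (Hdiff : forall j k r p, grp j = Some p ->
     differentiable (fun z : 'rV[R]_Dth * 'rV[R]_(D p) =>
                       probA D K Rl I g j k p r z.1 z.2) (th0, tau0 p))
  (* all attacks estimable; J_{A_0} and J_Theta nonsingular *)
  (Htau : forall p, J_tau D K Rl grp I f g th0 tau0 p \in unitmx)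
  (HA0 : J_A D K Rl grp I f g th0 tau0 None \in unitmx)
  (HJ : J_Theta D K Rl grp I f g th0 tau0 \in unitmx)
  (* singular value decompositions of Phi_theta^(p) and Phi_tau^(p) *)
  (Uth : forall p, 'M[R]_Dth)
  (Lth : forall p, 'M[R]_(Dth, Mp K Rl grp p))
  (Vth : forall p, 'M[R]_(Mp K Rl grp p))
  (Uta : forall p, 'M[R]_(D p))
  (Lta : forall p, 'M[R]_(D p, Mp K Rl grp p))
  (Vta : forall p, 'M[R]_(Mp K Rl grp p))
  (Hsvd_th : forall p,
     is_svd (Phi_th D K Rl grp I f g th0 tau0 p) (Uth p) (Lth p) (Vth p))
  (Hsvd_ta : forall p,
     is_svd (Phi_tau D K Rl grp I f g th0 tau0 p) (Uta p) (Lta p) (Vta p)) :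
  let J := J_Theta D K Rl grp I f g th0 tau0 in
  let JA0 := J_A D K Rl grp I f g th0 tau0 None in
  loewner_le (ulsubmx (invmx J)) (invmx JA0) /\
  (ulsubmx (invmx J) = invmx JA0 <->
   forall p, range_sub (Vth p *m (Lth p)^T) (Vta p *m (Lta p)^T)).
Proof.
move=> J JA0.
have psdA : psd JA0.
  rewrite /JA0 /J_A; apply: psd_sum => j _; apply: psd_sum => k _; apply: psd_sum => r _.
  apply: psd_scale; first by rewrite invr_ge0 ltW.
  exact: psd_outer.
have uC : forall p, Phi_tau D K Rl grp I f g th0 tau0 p *m (Phi_tau D K Rl grp I f g th0 tau0 p)^T \in unitmx.
  by move=> p; rewrite (@PP_tata _ _ _ _ _ _ _ _ _ _ _ _ _ Hpos).
have [H1 H2] := @schur_main _ _ _ _ _ _ (Phi_th D K Rl grp I f g th0 tau0) (Phi_tau D K Rl grp I f g th0 tau0) _ psdA HA0 uC HJ (@ul_JT _ _ _ _ _ _ _ _ _ _ _ _ _ Hpos) (@ur_JT _ _ _ _ _ _ _ _ _ _ _ _ _ Hpos) (@dl_JT _ _ _ _ _ _ _ _ _ _ _ _ _ Hpos) (@dr_JT _ _ _ _ _ _ _ _ _ _ _ _ _ Hpos).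
split => //; rewrite H2.
have eqv : forall a b (A : 'M[R]_(a, b)) U L V, is_svd A U L V ->
    (A <= (V *m L^T)^T)%MS /\ ((V *m L^T)^T <= A)%MS.
  move=> a b A U L V [hU _ _ _ ->]; rewrite trmx_mul trmxK; split.
    by rewrite -mulmxA submxMl.
  by apply/submxP; exists (U^T); rewrite !mulmxA hU mul1mx.
split => H p; have [a1 a2] := eqv _ _ _ _ _ _ (Hsvd_th p);
  have [b1 b2] := eqv _ _ _ _ _ _ (Hsvd_ta p).
  by rewrite /range_sub (submx_trans a2) // (submx_trans (H p)).
by apply: (submx_trans a1); apply: (submx_trans (H p)).
Qed.
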